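(* Let $X\sim\mathbb{P}$ on a sample space $\mathcal{X}$, let $G$ be a compact topological group acting on $\mathcal{X}$ with Haar probability measure $\mathbb{Q}$ (exact invariance not assumed). Let $\hat\theta:\mathcal{X}\to\mathbb{R}^p$ be an estimator of $\theta_0\in\mathbb{R}^p$ such that $(x,g)\mapsto\hat\theta(gx)$ is in $L^2(\mathbb{P}\times\mathbb{Q})$, let $\hat\theta_G(X)=\mathbb{E}_{g\sim\mathbb{Q}}\hat\theta(gX)$, and let $\|\hat\theta\|_\infty=\sup_x\|\hat\theta(x)\|_2$. Then $$\big|\mathrm{MSE}(\hat\theta_G)-\mathrm{MSE}(\hat\theta)+\mathbb{E}_X\operatorname{tr}(\mathrm{Cov}_g\hat\theta(gX))\big|\le\Delta,$$ where $$\Delta=\mathbb{E}_g\mathcal{W}_1(\hat\theta(gX),\hat\theta(X))\cdot\Big[\mathbb{E}_g\mathcal{W}_1(\hat\theta(gX),\hat\theta(X))+2\|\mathrm{Bias}(\hat\theta(X))\|_2+4\|\hat\theta\|_\infty\Big].$$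
   Context: $\mathrm{MSE}(T)=\mathbb{E}\|T(X)-\theta_0\|_2^2$ and $\mathrm{Bias}(T(X))=\mathbb{E}T(X)-\theta_0$. For fixed $g$, $\mathcal{W}_1(\hat\theta(gX),\hat\theta(X))$ is the Wasserstein-1 distance (with respect to the Euclidean metric) between the laws of $\hat\theta(gX)$ and $\hat\theta(X)$, $X\sim\mathbb{P}$; $\mathbb{E}_g$, $\mathrm{Cov}_g$ are over $g\sim\mathbb{Q}$. *)

(* Defs.v *)
From HB Require Import structures.
From mathcomp Require Import all_boot all_order all_algebra.
From mathcomp Require Import all_classical all_reals all_analysis.
Set Implicit Arguments.
Unset Strict Implicit.
Unset Printing Implicit Defensive.
Import Order.TTheory GRing.Theory Num.Theory.
Local Open Scope classical_set_scope.
Local Open Scope ring_scope.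

(* R^p is represented by p.-tuple R, equipped with the library's product
   sigma-algebra on tuples (= Borel sigma-algebra of R^p).  *)

Section Defs.
Context {R : realType} {p : nat}.

Definition norm2 (v : p.-tuple R) : R := Num.sqrt (\sum_(i < p) (tnth v i) ^+ 2).

Definition dist2 (u v : p.-tuple R) : R :=
  Num.sqrt (\sum_(i < p) (tnth u i - tnth v i) ^+ 2).

Definition is_coupling {d} {T : measurableType d} (P : probability T R)
    (f1 f2 : T -> p.-tuple R) (pi : probability (p.-tuple R * p.-tuple R)%type R) : Prop :=
  (forall A : set (p.-tuple R), measurable A ->
      pi (A `*` [set: p.-tuple R]) = P (f1 @^-1` A)) /\
  (forall B : set (p.-tuple R), measurable B ->
      pi ([set: p.-tuple R] `*` B) = P (f2 @^-1` B)).

Definition W1 {d} {T : measurableType d} (P : probability T R)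
    (f1 f2 : T -> p.-tuple R) : \bar R :=
  ereal_inf [set (\int[pi]_yz (dist2 yz.1 yz.2)%:E)%E |
             pi in [set pi | is_coupling P f1 f2 pi]].

Definition MSE {d} {T : measurableType d} (P : probability T R)
    (est : T -> p.-tuple R) (theta0 : p.-tuple R) : \bar R :=
  (\int[P]_x ((dist2 (est x) theta0) ^+ 2)%:E)%E.

Definition bias {d} {T : measurableType d} (P : probability T R)
    (est : T -> p.-tuple R) (theta0 : p.-tuple R) : p.-tuple R :=
  [tuple (\int[P]_x tnth (est x) i)%R - tnth theta0 i | i < p].

Definition supnorm {T : Type} (est : T -> p.-tuple R) : \bar R :=
  ereal_sup [set (norm2 (est x))%:E | x in [set: T]].

Definition meanv {d} {T : measurableType d} (Q : probability T R)
    (f : T -> p.-tuple R) : p.-tuple R :=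
  [tuple (\int[Q]_g tnth (f g) i)%R | i < p].

Definition covm {d} {T : measurableType d} (Q : probability T R)
    (f : T -> p.-tuple R) : 'M[R]_p :=
  \matrix_(i < p, j < p)
    (\int[Q]_g ((tnth (f g) i - tnth (meanv Q f) i) *
                (tnth (f g) j - tnth (meanv Q f) j)))%R.

End Defs.

Definition topological_group (G : ptopologicalType)
    (mul : G -> G -> G) (inv : G -> G) (one : G) : Prop :=
  [/\ (forall a b c, mul a (mul b c) = mul (mul a b) c),
      (forall a, mul one a = a /\ mul a one = a),
      (forall a, mul (inv a) a = one /\ mul a (inv a) = one),
      continuous (fun ab : G * G => mul ab.1 ab.2) &
      continuous inv].

Notation borelT G := (g_sigma_algebraType (@open G)).

Definition haar_probability (R : realType) (G : ptopologicalType)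
    (mul : G -> G -> G) (Q : probability (borelT G) R) : Prop :=
  forall (g : G) (A : set (borelT G)), measurable A ->
    Q ((mul g) @^-1` A) = Q A.

Definition group_action (G X : Type) (mul : G -> G -> G) (one : G)
    (act : G -> X -> X) : Prop :=
  (forall x, act one x = x) /\
  (forall g h x, act (mul g h) x = act g (act h x)).

(* Main.v *)
Require Import Defs.
From HB Require Import structures.
From mathcomp Require Import all_boot all_order all_algebra.
From mathcomp Require Import all_classical all_reals all_analysis.
From mathcomp Require Import ring lra measurable_realfun.
Import Order.TTheory GRing.Theory Num.Theory.
Local Open Scope classical_set_scope.
Local Open Scope ring_scope.

Section P0.
Context {R : realType} {p : nat}.
Implicit Types (a b : 'I_p -> R).

Lemma sumsq_ge0 a : 0 <= \sum_i a i ^+ 2.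
Proof. by apply: sumr_ge0 => i _; exact: sqr_ge0. Qed.

Lemma sqrt_sumsq a : Num.sqrt (\sum_i a i ^+ 2) ^+ 2 = \sum_i a i ^+ 2.
Proof. by rewrite sqr_sqrtr // sumsq_ge0. Qed.

Lemma sumsq_eq0 a : \sum_i a i ^+ 2 = 0 -> forall i, a i = 0.
Proof.
move=> h i; have := @psumr_eq0P R _ xpredT (fun i => a i ^+ 2).
by move=> /(_ (fun i _ => sqr_ge0 _) h i isT) /eqP; rewrite sqrf_eq0 => /eqP.
Qed.

Lemma cauchy_schwarz a b :
  \sum_i a i * b i <= Num.sqrt (\sum_i a i ^+ 2) * Num.sqrt (\sum_i b i ^+ 2).
Proof.
set A := Num.sqrt _; set B := Num.sqrt _.
have A0 : 0 <= A by exact: sqrtr_ge0.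
have B0 : 0 <= B by exact: sqrtr_ge0.
have [A_eq0|] := eqVneq A 0.
  have : \sum_i a i ^+ 2 = 0 by rewrite -sqrt_sumsq -/A A_eq0 expr0n.
  move/sumsq_eq0 => h; rewrite big1 ?A_eq0 ?mul0r// => i _; by rewrite h mul0r.
move=> An0.
have [B_eq0|Bn0] := eqVneq B 0.
  have : \sum_i b i ^+ 2 = 0 by rewrite -sqrt_sumsq -/B B_eq0 expr0n.
  move/sumsq_eq0 => h; rewrite big1 ?B_eq0 ?mulr0// => i _; by rewrite h mulr0.
have AB0 : 0 < A * B by rewrite mulr_gt0 // lt0r ?An0 ?Bn0.
have E : \sum_i (B * a i - A * b i) ^+ 2 =
   B ^+ 2 * (\sum_i a i ^+ 2) - 2 * (A * B) * (\sum_i a i * b i)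
   + A ^+ 2 * (\sum_i b i ^+ 2).
  rewrite !mulr_sumr -sumrB -big_split /=; apply: eq_bigr => i _; ring.
have := sumsq_ge0 (fun i => B * a i - A * b i).
rewrite E -sqrt_sumsq -/A -sqrt_sumsq -/B => h.
have : (A * B) * (\sum_i a i * b i) <= (A * B) * (A * B) by nra.
by rewrite ler_pM2l.
Qed.

Lemma cauchy_schwarz_abs a b :
  `|\sum_i a i * b i| <= Num.sqrt (\sum_i a i ^+ 2) * Num.sqrt (\sum_i b i ^+ 2).
Proof.
rewrite ler_norml; apply/andP; split; last exact: cauchy_schwarz.
have h := cauchy_schwarz (fun i => - a i) b.
have e1 : \sum_i (- a i) ^+ 2 = \sum_i a i ^+ 2 by apply: eq_bigr => i _; rewrite sqrrN.
have e2 : \sum_i - a i * b i = - \sum_i a i * b i.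
  by rewrite -sumrN; apply: eq_bigr => i _; rewrite mulNr.
rewrite e1 e2 in h; lra.
Qed.

Lemma minkowski a b :
  Num.sqrt (\sum_i (a i + b i) ^+ 2) <=
  Num.sqrt (\sum_i a i ^+ 2) + Num.sqrt (\sum_i b i ^+ 2).
Proof.
set A := Num.sqrt (\sum_i a i ^+ 2); set B := Num.sqrt (\sum_i b i ^+ 2).
have A0 : 0 <= A by exact: sqrtr_ge0.
have B0 : 0 <= B by exact: sqrtr_ge0.
rewrite -(ger0_norm (addr_ge0 A0 B0)) -sqrtr_sqr ler_sqrt ?sqr_ge0 //.
have -> : \sum_i (a i + b i) ^+ 2 =
   \sum_i a i ^+ 2 + 2 * (\sum_i a i * b i) + \sum_i b i ^+ 2.
  rewrite mulr_sumr -!big_split /=; apply: eq_bigr => i _; ring.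
have := cauchy_schwarz a b; rewrite -/A -/B.
rewrite -[\sum_i a i ^+ 2]sqrt_sumsq -[\sum_i b i ^+ 2]sqrt_sumsq -/A -/B.
move=> h; nra.
Qed.

Lemma abs_le_sqrt_sumsq a i : `|a i| <= Num.sqrt (\sum_j a j ^+ 2).
Proof.
rewrite -sqrtr_sqr ler_sqrt ?sumsq_ge0 // (bigD1 i) //= lerDl.
by apply: sumr_ge0 => j _; exact: sqr_ge0.
Qed.

Lemma dist2_triangle (u v w : p.-tuple R) : dist2 u w <= dist2 u v + dist2 v w.
Proof.
rewrite /dist2.
have := minkowski (fun i => tnth u i - tnth v i) (fun i => tnth v i - tnth w i).
congr (_ <= _); congr Num.sqrt; apply: eq_bigr => i _; congr (_ ^+ 2); ring.
Qed.

Lemma dist2_le_norm (u v : p.-tuple R) : dist2 u v <= norm2 u + norm2 v.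
Proof.
rewrite /dist2 /norm2.
have := minkowski (fun i => tnth u i) (fun i => - tnth v i).
have -> : \sum_i (- tnth v i) ^+ 2 = \sum_i (tnth v i) ^+ 2.
  by apply: eq_bigr => i _; rewrite sqrrN.
by [].
Qed.

Lemma dist2_sym (u v : p.-tuple R) : dist2 u v = dist2 v u.
Proof.
by rewrite /dist2; congr Num.sqrt; apply: eq_bigr => i _; rewrite -sqrrN opprB.
Qed.

Lemma dist2_ge0 (u v : p.-tuple R) : 0 <= dist2 u v.
Proof. exact: sqrtr_ge0. Qed.

Lemma norm2_ge0 (u : p.-tuple R) : 0 <= norm2 u.
Proof. exact: sqrtr_ge0. Qed.

Lemma dist2_sq (u v : p.-tuple R) :
  dist2 u v ^+ 2 = \sum_i (tnth u i - tnth v i) ^+ 2.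
Proof. exact: (sqrt_sumsq (fun i => tnth u i - tnth v i)). Qed.

Lemma norm2_sq (u : p.-tuple R) : norm2 u ^+ 2 = \sum_i (tnth u i) ^+ 2.
Proof. exact: (sqrt_sumsq (fun i => tnth u i)). Qed.

Lemma abs_tnth_le (u : p.-tuple R) i : `|tnth u i| <= norm2 u.
Proof. exact: (abs_le_sqrt_sumsq (fun i => tnth u i)). Qed.

Lemma cs_tuple (u w : p.-tuple R) :
  `|\sum_i tnth u i * tnth w i| <= norm2 u * norm2 w.
Proof. exact: (cauchy_schwarz_abs (fun i => tnth u i) (fun i => tnth w i)). Qed.

End P0.
Section P1.
Context {R : realType} {p : nat}.
Local Open Scope ereal_scope.

Lemma inner_le d (T : measurableType d) (mu : {measure set T -> \bar R})
  (f1 f2 : T -> \bar R) : (forall x, 0 <= f1 x) -> (forall x, f1 x <= f2 x) ->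
  \int[mu]_x f1 x <= \int[mu]_x f2 x.
Proof.
move=> f10 f12; have f20 x : 0 <= f2 x by exact: le_trans (f10 x) (f12 x).
rewrite !ge0_integralTE //; apply: ereal_sup_le => _ [h hf <-].
by exists h => // x; exact: le_trans (hf x) (f12 x).
Qed.

Lemma inner_leZ d (T : measurableType d) (mu : {measure set T -> \bar R})
  (k f : T -> \bar R) (a : R) : (0 <= a)%R -> measurable_fun [set: T] k ->
  (forall x, 0 <= k x) -> (forall x, k x <= a%:E * f x) ->
  \int[mu]_x k x <= a%:E * \int[mu]_x f x.
Proof.
move=> a0 mk k0 kf.
have [a_eq0|an0] := eqVneq a 0%R.
  rewrite a_eq0 in kf *; rewrite mul0e; rewrite (eq_integral (fun _ => 0)) ?integral0 //.
  by move=> x _; apply/eqP; rewrite eq_le k0 andbT; have := kf x; rewrite mul0e.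
have apos : (0 < a)%R by rewrite lt0r an0.
have -> : \int[mu]_x k x = a%:E * \int[mu]_x (a^-1%:E * k x).
  rewrite ge0_integralZl //; last by rewrite lee_fin invr_ge0.
  by rewrite muleA -EFinM divff // mul1e.
rewrite lee_pmul2l ?lte_fin //.
apply: inner_le => x; first by rewrite mule_ge0 // lee_fin invr_ge0.
rewrite -(@lee_pmul2l _ a%:E) ?lte_fin // muleA -EFinM divff // mul1e.
exact: kf.
Qed.

Lemma measurable_dist2 d (U : measurableType d) (F G : U -> p.-tuple R) :
  measurable_fun setT F -> measurable_fun setT G ->
  measurable_fun setT (fun u => dist2 (F u) (G u)).
Proof.
move=> mF mG; rewrite /dist2.
apply: (measurableT_comp (continuous_measurable_fun (@sqrt_continuous R))).
apply: measurable_sum => i; apply: measurable_funX; apply: measurable_funB.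
  exact: (measurableT_comp (measurable_tnth i) mF).
exact: (measurableT_comp (measurable_tnth i) mG).
Qed.

End P1.
Section Coupling.
Context {R : realType} {p : nat} d (T : measurableType d) (P : probability T R).
Variables (f1 f2 : T -> p.-tuple R).
Hypotheses (mf1 : measurable_fun [set: T] f1) (mf2 : measurable_fun [set: T] f2).
Variable (pi : probability (p.-tuple R * p.-tuple R)%type R).
Hypothesis hpi : is_coupling P f1 f2 pi.
Local Open Scope ereal_scope.

Lemma marg1 (phi : p.-tuple R -> \bar R) : measurable_fun [set: p.-tuple R] phi ->
  (forall y, 0 <= phi y) ->
  \int[pi]_yz phi yz.1 = \int[P]_x phi (f1 x).
Proof.
move=> mphi phi0.
have h1 := @ge0_integral_pushforward _ _ _ _ R fst measurable_fst pi setT phi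
   measurableT mphi (fun y _ => phi0 y).
have h2 := @ge0_integral_pushforward _ _ _ _ R f1 mf1 P setT phi
   measurableT mphi (fun y _ => phi0 y).
rewrite preimage_setT in h1; rewrite preimage_setT in h2.
rewrite -[LHS]h1 -[RHS]h2; apply: eq_measure_integral => A mA _.
change (pi (fst @^-1` A) = P (f1 @^-1` A)).
rewrite -hpi.1 //; congr (pi _); apply/seteqP; split => z /=.
  by move=> Az; split.
by case.
Qed.

Lemma marg2 (phi : p.-tuple R -> \bar R) : measurable_fun [set: p.-tuple R] phi ->
  (forall y, 0 <= phi y) ->
  \int[pi]_yz phi yz.2 = \int[P]_x phi (f2 x).
Proof.
move=> mphi phi0.
have h1 := @ge0_integral_pushforward _ _ _ _ R snd measurable_snd pi setT phi
   measurableT mphi (fun y _ => phi0 y).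
have h2 := @ge0_integral_pushforward _ _ _ _ R f2 mf2 P setT phi
   measurableT mphi (fun y _ => phi0 y).
rewrite preimage_setT in h1; rewrite preimage_setT in h2.
rewrite -[LHS]h1 -[RHS]h2; apply: eq_measure_integral => A mA _.
change (pi (snd @^-1` A) = P (f2 @^-1` A)).
rewrite -hpi.2 //; congr (pi _); apply/seteqP; split => z /=.
  by move=> Az; split.
by case.
Qed.

End Coupling.
Section Htr.
Context {R : realType} {p : nat}.

Definition htr (th0 : p.-tuple R) (T0 : R) (y : p.-tuple R) : R :=
  (Num.min (dist2 y th0) T0) ^+ 2.

Lemma min_lip (a b T0 : R) : `|Num.min a T0 - Num.min b T0| <= `|a - b|.
Proof.
have h1 := ler_norm (a - b).
have h2 : b - a <= `|a - b| by rewrite -normrN opprB ler_norm.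
rewrite ler_norml.
case: (leP a T0) => ha; case: (leP b T0) => hb;
  rewrite ?(min_l ha) ?(min_r (ltW ha)) ?(min_l hb) ?(min_r (ltW hb));
  apply/andP; split; lra.
Qed.

Lemma htr_ge0 th0 T0 y : 0 <= htr th0 T0 y.
Proof. exact: sqr_ge0. Qed.

Lemma min_ge0 (a T0 : R) : 0 <= a -> 0 <= T0 -> 0 <= Num.min a T0.
Proof. by move=> a0 T00; case: (leP a T0) => h; rewrite ?(min_l h) ?(min_r (ltW h)). Qed.

Lemma min_leT (a T0 : R) : Num.min a T0 <= T0.
Proof. by case: (leP a T0) => h; rewrite ?(min_l h) ?(min_r (ltW h)). Qed.

Lemma htr_le th0 T0 y : 0 <= T0 -> htr th0 T0 y <= T0 ^+ 2.
Proof.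
move=> T00; rewrite /htr; apply: lerXn2r; rewrite ?nnegrE ?min_ge0 ?dist2_ge0 //.
exact: min_leT.
Qed.

Lemma htr_lip th0 T0 y z : 0 <= T0 ->
  `|htr th0 T0 y - htr th0 T0 z| <= 2 * T0 * dist2 y z.
Proof.
move=> T00; rewrite /htr.
set a := dist2 y th0; set b := dist2 z th0.
have a0 : 0 <= a by exact: dist2_ge0.
have b0 : 0 <= b by exact: dist2_ge0.
have hab : `|a - b| <= dist2 y z.
  rewrite ler_norml; apply/andP; split.
    have := dist2_triangle z y th0; rewrite (dist2_sym z y) -/a -/b; lra.
  have := dist2_triangle y z th0; rewrite -/a -/b; lra.
set A := Num.min a T0; set B := Num.min b T0.
have A0 : 0 <= A by exact: min_ge0.
have B0 : 0 <= B by exact: min_ge0.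
have AT : A <= T0 by exact: min_leT.
have BT : B <= T0 by exact: min_leT.
have -> : A ^+ 2 - B ^+ 2 = (A - B) * (A + B) by ring.
rewrite normrM (ger0_norm (addr_ge0 A0 B0)).
have hAB : `|A - B| <= dist2 y z := le_trans (min_lip a b T0) hab.
rewrite [2 * T0 * _]mulrC; apply: ler_pM.
- exact: normr_ge0.
- exact: addr_ge0.
- exact: hAB.
- lra.
Qed.

Lemma measurable_htr th0 T0 : measurable_fun [set: p.-tuple R] (htr th0 T0).
Proof.
apply: measurable_funX; apply: measurable_minr => //.
exact: (@measurable_dist2 R p _ _ id (fun=> th0)).
Qed.

End Htr.
Section Lip.
Context {R : realType} {p : nat}.
Local Open Scope ereal_scope.

Lemma bint d (U : measurableType d) (mu : probability U R) (f : U -> R) (M : R) :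
  measurable_fun [set: U] f -> (forall x, (`|f x| <= M)%R) ->
  mu.-integrable [set: U] (EFin \o f).
Proof.
move=> mf fM; apply/integrableP; split; first exact/measurable_EFinP.
apply: (@le_lt_trans _ _ (\int[mu]_x (cst M%:E) x)).
  apply: ge0_le_integral => //.
  - by apply: measurableT_comp => //; exact/measurable_EFinP.
  - by move=> x _ /=; rewrite lee_fin fM.
rewrite integral_cst //.
have e := probability_setT mu.
have -> : M%:E * mu [set: U] = M%:E * 1 by congr (_ * _); exact: e.
by rewrite mule1 ltry.
Qed.

Context d (T : measurableType d) (P : probability T R).
Variables (f1 f2 : T -> p.-tuple R).
Hypotheses (mf1 : measurable_fun [set: T] f1) (mf2 : measurable_fun [set: T] f2).
Variables (th0 : p.-tuple R) (T0 : R).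
Hypothesis T00 : (0 <= T0)%R.

Let h := htr th0 T0.
Let mh : measurable_fun [set: p.-tuple R] h := measurable_htr th0 T0.
Let hb y : (`|h y| <= T0 ^+ 2)%R.
Proof. by rewrite ger0_norm ?htr_ge0 // htr_le. Qed.

Lemma coupling_bound (pi : probability (p.-tuple R * p.-tuple R)%type R) :
  is_coupling P f1 f2 pi ->
  `|\int[P]_x (h (f1 x))%:E - \int[P]_x (h (f2 x))%:E| <=
   (2 * T0)%:E * \int[pi]_yz (dist2 yz.1 yz.2)%:E.
Proof.
move=> hpi.
have mdp : measurable_fun [set: (p.-tuple R * p.-tuple R)%type] (fun yz => dist2 yz.1 yz.2).
  exact: (@measurable_dist2 R p _ _ fst snd measurable_fst measurable_snd).
have mEh : measurable_fun [set: p.-tuple R] (EFin \o h) by exact/measurable_EFinP.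
have e1 := @marg1 _ _ _ _ P f1 f2 mf1 pi hpi _ mEh (fun y => ltac:(by rewrite /= lee_fin; exact: htr_ge0)).
have e2 := @marg2 _ _ _ _ P f1 f2 mf2 pi hpi _ mEh (fun y => ltac:(by rewrite /= lee_fin; exact: htr_ge0)).
rewrite /= in e1 e2; rewrite -e1 -e2.
have m1 : measurable_fun [set: (p.-tuple R * p.-tuple R)%type] (fun yz => h yz.1).
  exact: measurableT_comp mh measurable_fst.
have m2 : measurable_fun [set: (p.-tuple R * p.-tuple R)%type] (fun yz => h yz.2).
  exact: measurableT_comp mh measurable_snd.
rewrite -integralB_EFin //; first last.
  exact: (@bint _ _ pi _ _ m2 (fun yz => hb yz.2)).
  exact: (@bint _ _ pi _ _ m1 (fun yz => hb yz.1)).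
have mB : measurable_fun [set: (p.-tuple R * p.-tuple R)%type]
    (fun yz => (h yz.1)%:E - (h yz.2)%:E).
  rewrite (_ : (fun yz => _) = EFin \o (fun yz => h yz.1 - h yz.2)%R);
    last by apply/funext => yz; rewrite /= EFinB.
  by apply/measurable_EFinP; exact: measurable_funB.
apply: le_trans (le_abse_integral _ _ mB) _ => //.
rewrite -ge0_integralZl_EFin //;
  try (by move=> yz _; rewrite lee_fin dist2_ge0);
  try (by rewrite mulr_ge0);
  try (by apply/measurable_EFinP; exact: mdp).
apply: ge0_le_integral => //.
- exact: measurableT_comp.
- apply: measurable_funeM.
  by apply/measurable_EFinP; exact: mdp.
- by move=> yz _; rewrite -EFinB -EFinM /= lee_fin htr_lip.
Qed.

Lemma lip_W1 :
  `|\int[P]_x (h (f1 x))%:E - \int[P]_x (h (f2 x))%:E| <= (2 * T0)%:E * W1 P f1 f2.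
Proof.
have [T0_eq0|T0n0] := eqVneq T0 0%R.
  have h0 y : h y = 0%R.
    by rewrite /h /htr T0_eq0 min_r ?dist2_ge0 // expr0n.
  rewrite (eq_integral (fun _ => 0)); last by move=> x _; rewrite h0.
  rewrite [X in _ - X](eq_integral (fun _ => 0)); last by move=> x _; rewrite h0.
  by rewrite integral0 subee // abse0 mule_ge0 // ?lee_fin ?mulr_ge0 //; 
     apply: le_ereal_inf_tmp => _ [pi _ <-]; apply: integral_ge0 => yz _; rewrite lee_fin dist2_ge0.
have T0pos : (0 < 2 * T0)%R by rewrite mulr_gt0 // lt0r T0n0.
rewrite /W1 -ereal_inf_pZl //; apply: le_ereal_inf_tmp => _ [_ [pi hpi <-] <-].
exact: coupling_bound.
Qed.

End Lip.
Section IntR.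
Context {R : realType} {d : measure_display} {U : measurableType d} {mu : {measure set U -> \bar R}}.
Local Open Scope ereal_scope.

Lemma intR_D (f g : U -> R) : mu.-integrable [set: U] (EFin \o f) ->
  mu.-integrable [set: U] (EFin \o g) ->
  mu.-integrable [set: U] (EFin \o (fun x => f x + g x)%R).
Proof.
move=> hf hg; apply: (eq_integrable _ (fun x => (f x)%:E + (g x)%:E)) => //.
exact: integrableD.
Qed.

Lemma intR_Z (k : R) (f : U -> R) : mu.-integrable [set: U] (EFin \o f) ->
  mu.-integrable [set: U] (EFin \o (fun x => k * f x)%R).
Proof.
move=> hf; apply: (eq_integrable _ (fun x => k%:E * (f x)%:E)) => //.
exact: integrableZl.
Qed.

Lemma intR_le (f g : U -> R) : measurable_fun [set: U] f ->
  (forall x, (`|f x| <= g x)%R) -> mu.-integrable [set: U] (EFin \o g) ->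
  mu.-integrable [set: U] (EFin \o f).
Proof.
move=> mf fg ig; apply: (le_integrable measurableT _ _ ig).
  exact/measurable_EFinP.
by move=> x _ /=; rewrite lee_fin (le_trans (fg x)) // ler_norm.
Qed.

Lemma Rint_sum (p : nat) (f : 'I_p -> U -> R) :
  (forall i, mu.-integrable [set: U] (EFin \o f i)) ->
  (\int[mu]_x (\sum_i f i x) = \sum_i \int[mu]_x f i x)%R.
Proof.
move=> hf.
have e : (\int[mu]_x (\sum_i f i x)%:E)%E = \sum_i (\int[mu]_x (f i x)%:E)%E.
  rewrite -integral_sum //; apply: eq_integral => x _; by rewrite sumEFin.
rewrite /Rintegral e.
rewrite (eq_bigr (fun i => (fine (\int[mu]_x (f i x)%:E))%:E)); last first.
  by move=> i _; rewrite fineK //; exact: integrable_fin_num (hf i).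
by rewrite sumEFin.
Qed.

End IntR.

Section Var.
Context {R : realType} d (U : measurableType d) (Q : probability U R).
Local Open Scope ring_scope.

Lemma int_cst (k : R) : Q.-integrable [set: U] (EFin \o (fun _ => k)).
Proof. exact: (@bint R _ _ Q (fun _ => k) `|k| (measurable_cst k) (fun _ => lexx _)). Qed.

Variable w : U -> R.
Hypotheses (iw : Q.-integrable [set: U] (EFin \o w))
  (iw2 : Q.-integrable [set: U] (EFin \o (fun g => w g ^+ 2))).

Lemma int_quad a b : Q.-integrable [set: U] (EFin \o (fun g => (w g - a) * (w g - b))).
Proof.
apply: (eq_integrable _ (EFin \o (fun g => w g ^+ 2 + ((- (a + b)) * w g + a * b)))) => //.
  by move=> g _ /=; congr EFin; ring.
apply: intR_D => //; apply: intR_D; first exact: intR_Z.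
exact: int_cst.
Qed.

Lemma Rint_quad a b : \int[Q]_g ((w g - a) * (w g - b)) =
  \int[Q]_g (w g ^+ 2) - (a + b) * \int[Q]_g w g + a * b.
Proof.
transitivity (\int[Q]_g (w g ^+ 2 + ((- (a + b)) * w g + a * b))).
  by apply: eq_Rintegral => g _; ring.
rewrite RintegralD //; last by apply: intR_D; [exact: intR_Z|exact: int_cst].
rewrite RintegralD //; [|exact: intR_Z|exact: int_cst].
rewrite RintegralZl // Rintegral_cst //.
rewrite [fine _](_ : _ = 1); last exact: (congr1 fine (probability_setT Q)).
rewrite mulr1; ring.
Qed.

Lemma var_decomp c : let m := \int[Q]_g w g in
  \int[Q]_g ((w g - c) ^+ 2) = (m - c) ^+ 2 + \int[Q]_g ((w g - m) * (w g - m)).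
Proof.
move=> m.
transitivity (\int[Q]_g ((w g - c) * (w g - c))).
  by apply: eq_Rintegral => g _; rewrite expr2.
rewrite !Rint_quad -/m; ring.
Qed.

End Var.
Section Main.
Context (R : realType) (p : nat) (dX : measure_display) (X : measurableType dX)
  (P : probability X R) (G : ptopologicalType) (Q : probability (borelT G) R)
  (act : G -> X -> X) (theta : X -> p.-tuple R) (theta0 : p.-tuple R).
Hypothesis hL2m : measurable_fun [set: (X * borelT G)%type]
            (fun xg : X * borelT G => theta (act xg.2 xg.1)).
Hypothesis hL2i : (P \x Q)%E.-integrable [set: (X * borelT G)%type]
            (fun xg : X * borelT G => ((norm2 (theta (act xg.2 xg.1))) ^+ 2)%:E).

Hypothesis htheta : measurable_fun [set: X] theta.

Let V (xg : X * borelT G) := theta (act xg.2 xg.1).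
Let v (i : 'I_p) (xg : X * borelT G) := tnth (V xg) i.
Let sq (xg : X * borelT G) := norm2 (V xg) ^+ 2.
Let qf (xg : X * borelT G) := dist2 (V xg) theta0 ^+ 2.

Lemma mv i : measurable_fun [set: (X * borelT G)%type] (v i).
Proof. exact: ((measurable_fun_tnthP _).1 hL2m i). Qed.

Lemma msec g : measurable_fun [set: X] (fun x => theta (act g x)).
Proof.
have := measurableT_comp hL2m (pair2_measurable (T1 := X) (T2 := borelT G) g).
by [].
Qed.

Lemma msq : measurable_fun [set: (X * borelT G)%type] sq.
Proof.
apply: measurable_funX; rewrite /sq /norm2.
apply: (measurableT_comp (continuous_measurable_fun (@sqrt_continuous R))).
by apply: measurable_sum => i; apply: measurable_funX; exact: mv.
Qed.

Lemma mqf : measurable_fun [set: (X * borelT G)%type] qf.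
Proof.
apply: measurable_funX.
exact: (@measurable_dist2 R p _ _ V (fun=> theta0) hL2m (measurable_cst _)).
Qed.

Lemma int_sq : (P \x Q)%E.-integrable [set: (X * borelT G)%type] (EFin \o sq).
Proof. exact: hL2i. Qed.

Lemma int_cstPQ (k : R) : (P \x Q)%E.-integrable [set: (X * borelT G)%type] (EFin \o (fun _ => k)).
Proof. exact: (@bint R _ _ (P \x Q)%E (fun _ => k) `|k| (measurable_cst k) (fun _ => lexx _)). Qed.

Lemma bound_qf xg : `|qf xg| <= 2 * sq xg + 2 * norm2 theta0 ^+ 2.
Proof.
rewrite /qf /sq ger0_norm ?sqr_ge0 //.
have h := dist2_le_norm (V xg) theta0.
have h0 := dist2_ge0 (V xg) theta0; have h1 := norm2_ge0 (V xg); have h2 := norm2_ge0 theta0.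
have h3 : dist2 (V xg) theta0 ^+ 2 <= (norm2 (V xg) + norm2 theta0) ^+ 2.
  by apply: lerXn2r; rewrite ?nnegrE ?addr_ge0.
have h4 := sqr_ge0 (norm2 (V xg) - norm2 theta0).
nra.
Qed.

Lemma bound_v i xg : `|v i xg| <= 1 + sq xg.
Proof.
rewrite /sq; have := abs_tnth_le (V xg) i; rewrite -/(v i xg).
have := normr_ge0 (v i xg); nra.
Qed.

Lemma bound_v2 i xg : `|v i xg ^+ 2| <= sq xg.
Proof.
rewrite /sq ger0_norm ?sqr_ge0 //; have := abs_tnth_le (V xg) i; rewrite -/(v i xg).
rewrite -real_normK ?num_real //; have := normr_ge0 (v i xg); nra.
Qed.

Lemma int_qf : (P \x Q)%E.-integrable [set: (X * borelT G)%type] (EFin \o qf).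
Proof.
have := @intR_le R _ _ (P \x Q)%E qf _ mqf bound_qf. apply; apply: intR_D; first exact: intR_Z int_sq.
exact: int_cstPQ.
Qed.

Lemma int_v i : (P \x Q)%E.-integrable [set: (X * borelT G)%type] (EFin \o v i).
Proof.
have := @intR_le R _ _ (P \x Q)%E (v i) _ (mv i) (bound_v i). apply; apply: intR_D; last exact: int_sq.
exact: int_cstPQ.
Qed.

Lemma int_v2 i : (P \x Q)%E.-integrable [set: (X * borelT G)%type]
  (EFin \o (fun xg => v i xg ^+ 2)).
Proof.
have := @intR_le R _ _ (P \x Q)%E (fun xg => v i xg ^+ 2) _ _ (bound_v2 i). apply.
  by apply: measurable_funX; exact: mv.
exact: int_sq.
Qed.

Let thetaG x := meanv Q (fun g : borelT G => theta (act g x)).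
Let muv (i : 'I_p) x := \int[Q]_g v i (x, g).
Let aG x := dist2 (thetaG x) theta0 ^+ 2.
Let trc x := \tr (covm Q (fun g : borelT G => theta (act g x))).

Lemma tnth_thetaG x i : tnth (thetaG x) i = muv i x.
Proof. by rewrite /thetaG /meanv tnth_mktuple. Qed.

Lemma aGE x : aG x = \sum_i (muv i x - tnth theta0 i) ^+ 2.
Proof. by rewrite /aG dist2_sq; apply: eq_bigr => i _; rewrite tnth_thetaG. Qed.

Lemma trcE x : trc x =
  \sum_i \int[Q]_g ((v i (x, g) - muv i x) * (v i (x, g) - muv i x)).
Proof.
rewrite /trc /mxtrace; apply: eq_bigr => i _; rewrite mxE.
by apply: eq_Rintegral => g _; rewrite /meanv tnth_mktuple.
Qed.

Lemma msecv i x : measurable_fun [set: borelT G] (fun g => v i (x, g)).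
Proof. exact: (measurableT_comp (mv i) (pair1_measurable x)). Qed.

Lemma decomp_x x : Q.-integrable [set: borelT G] (EFin \o (fun g => sq (x, g))) ->
  ((aG x + trc x)%:E = \int[Q]_g (qf (x, g))%:E)%E.
Proof.
move=> isq.
have iw i : Q.-integrable [set: borelT G] (EFin \o (fun g => v i (x, g))).
  have := @intR_le R _ _ Q (fun g => v i (x, g)) _ (msecv i x) (fun g => bound_v i (x, g)).
  apply; apply: intR_D; [exact: int_cst | exact: isq].
have iw2 i : Q.-integrable [set: borelT G] (EFin \o (fun g => v i (x, g) ^+ 2)).
  have := @intR_le R _ _ Q (fun g => v i (x, g) ^+ 2) _ _ (fun g => bound_v2 i (x, g)).
  apply; [by apply: measurable_funX; exact: msecv | exact: isq].
have iq i : Q.-integrable [set: borelT G]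
    (fun g => ((v i (x, g) - tnth theta0 i) ^+ 2)%:E).
  have := @int_quad R _ _ Q _ (iw i) (iw2 i) (tnth theta0 i) (tnth theta0 i).
  by apply: eq_integrable => // g _ /=; rewrite expr2.
transitivity (\int[Q]_g (\sum_i ((v i (x, g) - tnth theta0 i) ^+ 2)%:E)%E)%E; first last.
  by apply: eq_integral => g _; rewrite /qf dist2_sq -sumEFin.
rewrite integral_sum //.
rewrite (eq_bigr (fun i => (\int[Q]_g ((v i (x, g) - tnth theta0 i) ^+ 2))%:E)); last first.
  by move=> i _; rewrite /Rintegral fineK //; exact: integrable_fin_num (iq i).
rewrite sumEFin aGE trcE -big_split /=; congr EFin.
apply: eq_bigr => i _.
by rewrite (@var_decomp R _ _ Q (fun g => v i (x, g)) (iw i) (iw2 i) (tnth theta0 i)).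
Qed.

Lemma mmuv i : measurable_fun [set: X] (muv i).
Proof.
have h := @measurable_fubini_F _ _ _ _ R P Q (EFin \o v i) (int_v i).
exact: (measurableT_comp (fine_measurable measurableT) h).
Qed.

Lemma maG : measurable_fun [set: X] aG.
Proof.
rewrite (_ : aG = fun x => \sum_i (muv i x - tnth theta0 i) ^+ 2); last first.
  by apply/funext => x; rewrite aGE.
apply: measurable_sum => i; apply: measurable_funX; apply: measurable_funB.
  exact: mmuv.
exact: measurable_cst.
Qed.

Lemma mtrc : measurable_fun [set: X] trc.
Proof.
rewrite (_ : trc = fun x => \sum_i \int[Q]_g ((v i (x, g) - muv i x) * (v i (x, g) - muv i x)));
  last by apply/funext => x; rewrite trcE.
apply: measurable_sum => i.
pose k (xg : X * borelT G) := (v i xg - muv i xg.1) * (v i xg - muv i xg.1).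
have mk : measurable_fun [set: (X * borelT G)%type] k.
  apply: measurable_funM; apply: measurable_funB; first exact: mv.
    exact: (measurableT_comp (mmuv i) measurable_fst).
  exact: mv.
  exact: (measurableT_comp (mmuv i) measurable_fst).
have k0 xg : (0 <= (EFin \o k) xg)%E by rewrite /= lee_fin /k -expr2 sqr_ge0.
have mEk : measurable_fun [set: (X * borelT G)%type] (EFin \o k).
  exact/measurable_EFinP.
have h := @measurable_fun_fubini_tonelli_F _ _ _ _ R Q (EFin \o k) mEk k0.
exact: (measurableT_comp (fine_measurable measurableT) h).
Qed.

Lemma aG_ge0 x : 0 <= aG x.
Proof. exact: sqr_ge0. Qed.

Lemma trc_ge0 x : 0 <= trc x.
Proof.
rewrite trcE; apply: sumr_ge0 => i _; apply: Rintegral_ge0 => g _.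
by rewrite -expr2 sqr_ge0.
Qed.

Lemma mqfE : measurable_fun [set: (X * borelT G)%type] (EFin \o qf).
Proof. by apply/measurable_EFinP; exact: mqf. Qed.

Lemma qfE0 xg : (0 <= (EFin \o qf) xg)%E.
Proof. by rewrite /= lee_fin sqr_ge0. Qed.

Lemma decomp : (\int[P]_x (aG x)%:E + \int[P]_x (trc x)%:E =
   \int[Q]_g \int[P]_x (qf (x, g))%:E)%E.
Proof.
rewrite -ge0_integralD //; first last.
- by apply/measurable_EFinP; exact: mtrc.
- by move=> x _; rewrite lee_fin trc_ge0.
- by apply/measurable_EFinP; exact: maG.
- by move=> x _; rewrite lee_fin aG_ge0.
rewrite (ae_eq_integral (fun x => (\int[Q]_g (qf (x, g))%:E)%E)) //.
- exact: (@fubini_tonelli _ _ _ _ R P Q (EFin \o qf) mqfE qfE0).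
- by apply: emeasurable_funD; apply/measurable_EFinP; [exact: maG | exact: mtrc].
- exact: (@measurable_fun_fubini_tonelli_F _ _ _ _ R Q (EFin \o qf) mqfE qfE0).
- apply: filterS (ae_integrable1 int_sq) => x hx _.
  by rewrite -EFinD; apply: decomp_x.
Qed.

Lemma I_fin : (\int[Q]_g \int[P]_x (qf (x, g))%:E)%E \is a fin_num.
Proof.
have := integrable_fin_num measurableT int_qf.
by rewrite (@fubini_tonelli2 _ _ _ _ R P Q (EFin \o qf) mqfE qfE0).
Qed.

Lemma mm : measurable_fun [set: borelT G] (fun g => (\int[P]_x (qf (x, g))%:E)%E).
Proof. exact: (@measurable_fun_fubini_tonelli_G _ _ _ _ R P (EFin \o qf) mqfE qfE0). Qed.

Lemma mono_lim (F : X -> p.-tuple R) : measurable_fun [set: X] F ->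
  (\int[P]_x ((dist2 (F x) theta0) ^+ 2)%:E)%E =
  limn (fun n : nat => (\int[P]_x (htr theta0 n%:R (F x))%:E)%E).
Proof.
move=> mF.
rewrite -monotone_convergence //; first last.
- move=> x _ n m nm; rewrite lee_fin /htr; apply: lerXn2r;
    rewrite ?nnegrE ?min_ge0 ?dist2_ge0 //.
  rewrite le_min ge_min lexx /= ge_min ler_nat nm orbT //.
- by move=> n x _; rewrite lee_fin htr_ge0.
- move=> n; apply/measurable_EFinP.
  exact: (measurableT_comp (measurable_htr theta0 n%:R) mF).
apply: eq_integral => x _; apply/esym/cvg_lim => //.
apply: cvg_near_cst; near=> n.
rewrite /htr min_l //.
near: n; exists (Num.bound (dist2 (F x) theta0)) => // n /= hn.
apply: le_trans (ltW (archi_boundP (dist2_ge0 _ _))) _.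
by rewrite ler_nat.
Unshelve. all: by end_near.
Qed.

Let EWf (g : borelT G) := W1 P (fun x => theta (act g x)) theta.
Let A (n : nat) (g : borelT G) := (\int[P]_x (htr theta0 n%:R (theta (act g x)))%:E)%E.
Let B (n : nat) := (\int[P]_x (htr theta0 n%:R (theta x))%:E)%E.

Lemma mA n : measurable_fun [set: borelT G] (A n).
Proof.
have mh : measurable_fun [set: (X * borelT G)%type]
    (EFin \o (fun xg => htr theta0 n%:R (V xg))).
  by apply/measurable_EFinP; exact: (measurableT_comp (measurable_htr theta0 n%:R) hL2m).
exact: (@measurable_fun_fubini_tonelli_G _ _ _ _ R P _ mh
   (fun xg => ltac:(by rewrite /= lee_fin htr_ge0))).
Qed.

Lemma htr_bnd (T0 : R) y : 0 <= T0 -> `|htr theta0 T0 y| <= T0 ^+ 2.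
Proof. by move=> T00; rewrite ger0_norm ?htr_ge0 // htr_le. Qed.

Lemma B_fin n : B n \is a fin_num.
Proof.
apply: integrable_fin_num => //.
apply: (@bint R _ _ P (fun x => htr theta0 n%:R (theta x)) (n%:R ^+ 2)).
  exact: (measurableT_comp (measurable_htr theta0 n%:R) htheta).
by move=> x; exact: htr_bnd.
Qed.

Lemma ae_m_eq : (\int[Q]_g EWf g = 0)%E ->
  {ae Q, forall g, (\int[P]_x (qf (x, g))%:E =
                    \int[P]_x (dist2 (theta x) theta0 ^+ 2)%:E)%E}.
Proof.
move=> EW0.
have key n : {ae Q, forall g, [set: borelT G] g -> (A n g - B n)%E = cst 0%E g}.
  have mf : measurable_fun [set: borelT G] (fun g => (A n g - B n)%E).
    by apply: emeasurable_funB; [exact: mA | exact: measurable_cst].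
  apply/(ae_eq_integral_abs Q measurableT mf).
  apply/eqP; rewrite eq_le integral_ge0 ?andbT; last by move=> g _; exact: abse_ge0.
  have := @inner_leZ R _ _ Q (fun g => `|A n g - B n|%E) EWf (2 * n%:R) _ _ _ _.
  rewrite EW0 mule0; apply => //; first last; try (by rewrite mulr_ge0).
  - move=> g; exact: (@lip_W1 R p _ X P _ theta (msec g) htheta theta0 n%:R (ler0n _ _)).
  - exact: measurableT_comp.
have := ae_foralln key; apply: filterS => g hg.
rewrite /qf /V /=.
rewrite (mono_lim _ (msec g)) (mono_lim _ htheta).
suff e : (fun n : nat => A n g) = (fun n => B n) by rewrite /A /B in e; rewrite e.
apply/funext => n.
have h := hg n Logic.I; rewrite /= in h.
by rewrite -(subeK (A n g) (B_fin n)) h add0e.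
Qed.

Lemma dist2_zero (u : p.-tuple R) : dist2 u [tuple (0:R) | i < p] = norm2 u.
Proof.
by rewrite /dist2 /norm2; congr Num.sqrt; apply: eq_bigr => i _; rewrite tnth_mktuple subr0.
Qed.

Lemma theta0_le (s : R) : 0 <= s -> (forall x, norm2 (theta x) <= s) ->
  norm2 theta0 <= norm2 (bias P theta theta0) + s.
Proof.
move=> s0 hs.
pose EZ := [tuple \int[P]_x tnth (theta x) i | i < p].
have mz i : measurable_fun [set: X] (fun x => tnth (theta x) i).
  exact: ((measurable_fun_tnthP _).1 htheta i).
have iz i : P.-integrable [set: X] (EFin \o (fun x => tnth (theta x) i)).
  apply: (@bint R _ _ P _ s (mz i)) => x.
  exact: le_trans (abs_tnth_le _ _) (hs x).
have nb : norm2 (bias P theta theta0) = dist2 EZ theta0.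
  by rewrite /norm2 /dist2 /bias; congr Num.sqrt; apply: eq_bigr => i _; rewrite !tnth_mktuple.
have hEZ : norm2 EZ <= s.
  set e := norm2 EZ.
  have e0 : 0 <= e by exact: norm2_ge0.
  have ie i : P.-integrable [set: X] (EFin \o (fun x => tnth EZ i * tnth (theta x) i)).
    exact: intR_Z.
  have e2 : e ^+ 2 = \int[P]_x (\sum_i tnth EZ i * tnth (theta x) i).
    rewrite norm2_sq Rint_sum //; apply: eq_bigr => i _.
    by rewrite RintegralZl // expr2 {2}/EZ tnth_mktuple.
  have le1 : \int[P]_x (\sum_i tnth EZ i * tnth (theta x) i) <= \int[P]_x (e * s).
    apply: le_Rintegral => //.
    - apply: (@bint R _ _ P _ (e * s)).
        by apply: measurable_sum => i; apply: measurable_funM => //; exact: measurable_cst.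
      move=> x; apply: le_trans (cs_tuple EZ (theta x)) _.
      by rewrite -/e ler_wpM2l // hs.
    - exact: int_cst.
    - move=> x _; apply: le_trans (ler_norm _) _.
      apply: le_trans (cs_tuple EZ (theta x)) _.
      by rewrite -/e ler_wpM2l // hs.
  have : e ^+ 2 <= e * s.
    rewrite e2; apply: le_trans le1 _.
    rewrite Rintegral_cst //.
    by rewrite [fine _](_ : _ = 1) ?mulr1 //; exact: (congr1 fine (probability_setT P)).
  nra.
have := dist2_triangle theta0 EZ [tuple (0:R) | i < p].
rewrite !dist2_zero dist2_sym -nb; lra.
Qed.

Lemma W1_ge0 (f1 f2 : X -> p.-tuple R) : (0 <= W1 P f1 f2)%E.
Proof.
apply: le_ereal_inf_tmp => _ [pi _ <-]; apply: integral_ge0 => yz _.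
by rewrite lee_fin dist2_ge0.
Qed.

Lemma main_sec :
  let thetaG : X -> p.-tuple R :=
    fun x => meanv Q (fun g : borelT G => theta (act g x)) in
  let EW : \bar R :=
    (\int[Q]_g W1 P (fun x => theta (act g x)) theta)%E in
  (`| MSE P thetaG theta0 - MSE P theta theta0
      + \int[P]_x (\tr (covm Q (fun g : borelT G => theta (act g x))))%:E |
   <= EW * (EW + (2 * norm2 (bias P theta theta0))%:E + 4%:E * supnorm theta))%E.
Proof.
cbv zeta.
Local Open Scope ereal_scope.
set EW := \int[Q]_g W1 P _ _.
set a := MSE P _ theta0; set t := \int[P]_x _; set m0 := MSE P theta theta0.
set I := \int[Q]_g \int[P]_x (qf (x, g))%:E.
have decompE : a + t = I by exact: decomp.
have Ifin : I \is a fin_num by exact: I_fin.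
have t0 : 0 <= t by apply: integral_ge0 => x _; rewrite lee_fin; exact: trc_ge0.
have LHSE : a - m0 + t = I - m0 by rewrite addeAC decompE.
have EW0 : 0 <= EW by apply: integral_ge0 => g _; exact: W1_ge0.
pose x0 : X := point.
have S0 : (norm2 (theta x0))%:E <= supnorm theta.
  by apply: ereal_sup_ubound; exists x0.
have Sge0 : 0 <= supnorm theta by apply: le_trans S0; rewrite lee_fin norm2_ge0.
have [EW_eq0|EWn0] := eqVneq EW 0.
  have hae := ae_m_eq EW_eq0.
  have Im0 : I = m0.
    rewrite /I (ae_eq_integral (cst m0)) //; try (by apply: filterS hae => g hg _);
      try exact: measurable_cst; try exact: mm.
    rewrite integral_cst //.
    by rewrite [X in _ * X](_ : _ = 1) ?mule1 //; exact: (probability_setT Q).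
  rewrite LHSE Im0 subee -?Im0 // abse0.
  apply: (mule_ge0 EW0); apply: adde_ge0; last by apply: mule_ge0.
  by apply: (adde_ge0 EW0); rewrite lee_fin mulr_ge0 ?norm2_ge0.
have EWpos : 0 < EW by rewrite lt0e EWn0 EW0.
have Bge0 : 0 <= EW + (2 * norm2 (bias P theta theta0))%:E.
  by apply: (adde_ge0 EW0); rewrite lee_fin mulr_ge0 ?norm2_ge0.
case Sdef : (supnorm theta) => [s||]; last first.
- by rewrite Sdef in Sge0.
- have -> : 4%:E * +oo = +oo :> \bar R by rewrite mulry gtr0_sg // mul1e.
  rewrite addey; last by apply/negP => /eqP h; rewrite h in Bge0.
  by rewrite gt0_muley // leey.
have hs x : (norm2 (theta x) <= s)%R.
  by rewrite -lee_fin -Sdef; apply: ereal_sup_ubound; exists x.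
have s0 : (0 <= s)%R by rewrite -lee_fin -Sdef.
pose T0 := (s + norm2 theta0)%R.
have T00 : (0 <= T0)%R by rewrite addr_ge0 ?norm2_ge0.
have hd y : (dist2 (theta y) theta0 <= T0)%R.
  by apply: le_trans (dist2_le_norm _ _) _; rewrite lerD2r hs.
have hmA g : \int[P]_x (qf (x, g))%:E = \int[P]_x (htr theta0 T0 (theta (act g x)))%:E.
  by apply: eq_integral => x _; rewrite /qf /htr min_l // hd.
have hm0 : m0 = \int[P]_x (htr theta0 T0 (theta x))%:E.
  by apply: eq_integral => x _; rewrite /htr min_l // hd.
have m0fin : m0 \is a fin_num.
  rewrite hm0; apply: integrable_fin_num => //.
  apply: (@bint R _ _ P (fun x => htr theta0 T0 (theta x)) (T0 ^+ 2)).
    exact: (measurableT_comp (measurable_htr theta0 T0) htheta).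
  by move=> x; exact: htr_bnd.
have lip g : `|\int[P]_x (qf (x, g))%:E - m0| <=
    (2 * T0)%:E * W1 P (fun x => theta (act g x)) theta.
  by rewrite hmA hm0; exact: (@lip_W1 R p _ X P _ theta (msec g) htheta theta0 T0 T00).
have mge0 g : 0 <= \int[P]_x (qf (x, g))%:E.
  by apply: integral_ge0 => x _; rewrite lee_fin sqr_ge0.
have im : Q.-integrable [set: borelT G] (fun g => \int[P]_x (qf (x, g))%:E).
  apply/integrableP; split; first exact: mm.
  rewrite (eq_integral (fun g => \int[P]_x (qf (x, g))%:E)); last first.
    by move=> g _; rewrite gee0_abs.
  by move: Ifin; rewrite ge0_fin_numE //; apply: integral_ge0 => g _.
have IE : I - m0 = \int[Q]_g (\int[P]_x (qf (x, g))%:E - m0).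
  rewrite integralB //; last first.
    rewrite -(fineK m0fin); exact: (@int_cst R _ _ Q (fine m0)).
  rewrite integral_cst //.
  by rewrite [X in _ * X](_ : _ = 1) ?mule1 //; exact: (probability_setT Q).
have mB : measurable_fun [set: borelT G] (fun g => \int[P]_x (qf (x, g))%:E - m0).
  by apply: emeasurable_funB; [exact: mm | exact: measurable_cst].
rewrite LHSE IE.
apply: le_trans (le_abse_integral _ _ mB) _ => //.
apply: le_trans.
  apply: (@inner_leZ R _ _ Q (fun g => `|\int[P]_x (qf (x, g))%:E - m0|)
     (fun g => W1 P (fun x => theta (act g x)) theta) (2 * T0)).
  - by rewrite mulr_ge0.
  - exact: measurableT_comp.
  - by move=> g; exact: abse_ge0.
  - exact: lip.
rewrite -/EW.
have hc : (2 * T0)%:E <= (2 * norm2 (bias P theta theta0))%:E + 4%:E * s%:E.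
  rewrite -EFinM -EFinD lee_fin /T0.
  have := theta0_le s s0 hs; lra.
apply: le_trans (lee_wpmul2r EW0 hc) _.
rewrite muleC; apply: lee_wpmul2l => //.
by rewrite -addeA leeDr.
Qed.

End Main.

Theorem proposition6p3 (R : realType) (p : nat)
  (dX : measure_display) (X : measurableType dX) (P : probability X R)
  (G : ptopologicalType) (mul : G -> G -> G) (inv : G -> G) (one : G)
  (hG : topological_group mul inv one) (hcpt : compact [set: G])
  (Q : probability (borelT G) R) (hQ : haar_probability mul Q)
  (act : G -> X -> X) (hact : group_action mul one act)
  (theta : X -> p.-tuple R) (theta0 : p.-tuple R)
  (htheta : measurable_fun [set: X] theta)
  (hL2m : measurable_fun [set: (X * borelT G)%type]
            (fun xg : X * borelT G => theta (act xg.2 xg.1)))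
  (hL2i : (P \x Q)%E.-integrable [set: (X * borelT G)%type]
            (fun xg : X * borelT G => ((norm2 (theta (act xg.2 xg.1))) ^+ 2)%:E)) :
  let thetaG : X -> p.-tuple R :=
    fun x => meanv Q (fun g : borelT G => theta (act g x)) in
  let EW : \bar R :=
    (\int[Q]_g W1 P (fun x => theta (act g x)) theta)%E in
  (`| MSE P thetaG theta0 - MSE P theta theta0
      + \int[P]_x (\tr (covm Q (fun g : borelT G => theta (act g x))))%:E |
   <= EW * (EW + (2 * norm2 (bias P theta theta0))%:E + 4%:E * supnorm theta))%E.
Proof.
exact: (@main_sec R p dX X P G Q act theta theta0 hL2m hL2i htheta).
Qed.
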